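(* Let $M,N$ be weights of $\mathbb{R}^m,\mathbb{R}^n$, let $A\in\mathbb{R}^{m\times n}$ with $MA=AN$, and let $K\subseteq\mathbb{R}^n$ be a closed cone. Then $$\big((A^{[\dagger]})^{[*]}\circ I\circ K^{[*]}\big)^{[*]}\subseteq A\circ I\circ K+\mathcal{N}\big((A\circ I)^{[*]}\big).$$ If moreover $A^{[\dagger]}\circ A\circ K\subseteq K$, then equality holds.
   Context: A weight is a real symmetric matrix $W$ with $W^2=I$. $\mathbb{R}^m$ and $\mathbb{R}^n$ carry weights $M\in\mathbb{R}^{m\times m}$ and $N\in\mathbb{R}^{n\times n}$, respectively. The indefinite inner product on the space with weight $W$ is $[x,y]=\langle x,Wy\rangle$. Indefinite matrix product: if $B$ has $p$ columns and $C$ has $p$ rows (or is a vector in $\mathbb{R}^p$), $p\in\{m,n\}$, and $W$ is the weight of $\mathbb{R}^p$, then $B\circ C:=BWC$. $I$ denotes an identity matrix of the appropriate size. Indefinite adjoint of $B\in\mathbb{R}^{p\times q}$: $B^{[*]}:=W_qB^TW_p$, where $W_p,W_q$ are the weights of $\mathbb{R}^p,\mathbb{R}^q$. Indefinite Moore–Penrose inverse: $A^{[\dagger]}$ is the unique $X\in\mathbb{R}^{n\times m}$ such that - $A\circ X\circ A=A$, - $X\circ A\circ X=X$, - $(A\circ X)^{[*]}=A\circ X$, - $(X\circ A)^{[*]}=X\circ A$. It equals $NA^\dagger M$. Range and null space: for a matrix $B$ with $q$ columns, $\mathcal{R}(B)=\{B\circ x:x\in\mathbb{R}^q\}$ and $\mathcal{N}(B)=\{x\in\mathbb{R}^q:B\circ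 x=0\}$. A cone is a nonempty set closed under addition and under multiplication by nonnegative scalars. For $S$ a subset of $\mathbb{R}^p$ with weight $W$, the dual is $S^{[*]}=\{x\in\mathbb{R}^p:[x,t]\ge0\ \forall t\in S\}$; duals of subsets of $\mathbb{R}^m$ use $M$. For a matrix $B$ and a set $S$, $B\circ S=\{B\circ s:s\in S\}$. The sum of sets is the Minkowski sum. *)

(* Defs.v *)
From Stdlib Require Import Reals.
From mathcomp Require Import ssreflect ssrfun ssrbool eqtype ssrnat seq fintype bigop.
From HB Require Import structures.

Set Implicit Arguments.
Unset Strict Implicit.

Local Open Scope R_scope.

Lemma Rplus_assoc' : associative Rplus.
Proof. by move=> x y z; rewrite Rplus_assoc. Qed.
HB.instance Definition _ := Monoid.isComLaw.Build R 0%R Rplus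
  Rplus_assoc' Rplus_comm Rplus_0_l.

Definition Vec (n : nat) := 'I_n -> R.
Definition Mat (m n : nat) := 'I_m -> 'I_n -> R.

Definition mmul {m p q : nat} (A : Mat m p) (B : Mat p q) : Mat m q :=
  fun i j => \big[Rplus/0%R]_(k < p) (A i k * B k j).
Definition mvec {m p : nat} (A : Mat m p) (x : Vec p) : Vec m :=
  fun i => \big[Rplus/0%R]_(k < p) (A i k * x k).
Definition trmat {m n : nat} (A : Mat m n) : Mat n m := fun i j => A j i.
Definition idmat (n : nat) : Mat n n :=
  fun i j => if i == j then 1%R else 0%R.
Definition zerovec (n : nat) : Vec n := fun _ => 0%R.
Arguments idmat n : clear implicits.
Arguments zerovec n : clear implicits.

Definition dot {n : nat} (x y : Vec n) : R :=
  \big[Rplus/0%R]_(k < n) (x k * y k).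

Definition is_weight {n : nat} (W : Mat n n) : Prop :=
  trmat W = W /\ mmul W W = idmat n.

Definition iip {n : nat} (W : Mat n n) (x y : Vec n) : R := dot x (mvec W y).

(* indefinite matrix product B o C := B W C, W = weight of R^p *)
Definition imul {m p q : nat} (W : Mat p p) (B : Mat m p) (C : Mat p q) : Mat m q :=
  mmul (mmul B W) C.
Definition imulv {m p : nat} (W : Mat p p) (B : Mat m p) (x : Vec p) : Vec m :=
  mvec (mmul B W) x.

(* indefinite adjoint of B in R^{p x q}: B^[*] = Wq B^T Wp *)
Definition iadj {p q : nat} (Wp : Mat p p) (Wq : Mat q q) (B : Mat p q) : Mat q p :=
  mmul (mmul Wq (trmat B)) Wp.

(* X is the indefinite Moore-Penrose inverse of A (A : m x n, X : n x m),
   M weight of R^m, N weight of R^n: the four defining equations *)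
Definition is_imp {m n : nat} (M : Mat m m) (N : Mat n n) (A : Mat m n) (X : Mat n m)
  : Prop :=
  imul M (imul N A X) A = A /\
  imul N (imul M X A) X = X /\
  iadj M M (imul N A X) = imul N A X /\
  iadj N N (imul M X A) = imul M X A.

Definition vset (n : nat) := Vec n -> Prop.

Definition vsubset {n : nat} (S T : vset n) : Prop := forall x, S x -> T x.

Definition irange {p q : nat} (W : Mat q q) (B : Mat p q) : vset p :=
  fun y => exists x : Vec q, y = imulv W B x.
Definition inull {p q : nat} (W : Mat q q) (B : Mat p q) : vset q :=
  fun x => imulv W B x = zerovec p.

Definition is_cone {n : nat} (K : vset n) : Prop :=
  (exists x, K x) /\
  (forall x y, K x -> K y -> K (fun i => x i + y i)) /\
  (forall (a : R) x, 0 <= a -> K x -> K (fun i => a * x i)).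

(* topologically closed in R^n (contains all its adherent points;
   max-norm balls, same topology as the Euclidean one) *)
Definition is_closed {n : nat} (K : vset n) : Prop :=
  forall x : Vec n,
    (forall eps : R, 0 < eps -> exists y, K y /\ forall i, Rabs (y i - x i) < eps) ->
    K x.

Definition idual {n : nat} (W : Mat n n) (S : vset n) : vset n :=
  fun x => forall t, S t -> 0 <= iip W x t.

Definition iimage {p q : nat} (W : Mat q q) (B : Mat p q) (S : vset q) : vset p :=
  fun y => exists s, S s /\ y = imulv W B s.

Definition msum {n : nat} (S T : vset n) : vset n :=
  fun z => exists x y, S x /\ T y /\ z = (fun i => x i + y i).

(* Main.v *)
Require Import Defs.
From Stdlib Require Import Reals Lra Lia.
From mathcomp Require Import ssreflect ssrfun ssrbool eqtype ssrnat seq fintype bigop.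
From mathcomp Require Import all_boot all_algebra.
From mathcomp Require Import Rstruct.
From Stdlib Require Import FunctionalExtensionality Classical ClassicalEpsilon.
Import GRing.Theory.
Set Implicit Arguments.
Unset Strict Implicit.
Local Open Scope R_scope.
Ltac pg := match goal with |- ?g => idtac g end.

Section Bsum.
Variable I : Type.
Lemma bsum_lin (r : seq I) (a b : R) (F G : I -> R) :
  \big[Rplus/0]_(i <- r) (a * F i + b * G i) =
  a * \big[Rplus/0]_(i <- r) F i + b * \big[Rplus/0]_(i <- r) G i.
Proof. elim: r => [|x r IH]; rewrite ?big_nil ?big_cons /= ?IH; lra. Qed.
Lemma bsum_nonneg (r : seq I) (F : I -> R) :
  (forall i, 0 <= F i) -> 0 <= \big[Rplus/0]_(i <- r) F i.
Proof. move=> H; elim: r => [|x r IH]; rewrite ?big_nil ?big_cons /=; [lra|]. have := H x; lra. Qed.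
Lemma bsum_cv (r : seq I) (F : nat -> I -> R) (L : I -> R) :
  (forall i, Un_cv (fun j => F j i) (L i)) ->
  Un_cv (fun j => \big[Rplus/0]_(i <- r) F j i) (\big[Rplus/0]_(i <- r) L i).
Proof.
move=> H; elim: r => [|x r IH].
- rewrite big_nil. move=> eps Heps; exists 0%nat => j _. rewrite big_nil Rdist_eq. lra.
- rewrite big_cons /=.
  have := CV_plus _ _ _ _ (H x) IH. apply: Un_cv_ext => j. by rewrite big_cons.
Qed.
Lemma bsum_lin3 (r : seq I) (a b c : R) (F G H : I -> R) :
  \big[Rplus/0]_(i <- r) (a * F i + b * G i + c * H i) =
  a * \big[Rplus/0]_(i <- r) F i + b * \big[Rplus/0]_(i <- r) G i
  + c * \big[Rplus/0]_(i <- r) H i.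
Proof. elim: r => [|x r IH]; rewrite ?big_nil ?big_cons /= ?IH; lra. Qed.
End Bsum.
Lemma bsum_term (I : eqType) (r : seq I) (F : I -> R) c :
  (forall i, 0 <= F i) -> c \in r -> F c <= \big[Rplus/0]_(i <- r) F i.
Proof.
move=> H; elim: r => [|x r IH] //; rewrite big_cons /= in_cons => /orP [/eqP ->|Hc].
- have := bsum_nonneg r H; lra.
- have := IH Hc; have := H x; lra.
Qed.

Lemma uniform_N n (P : 'I_n -> nat -> Prop) :
  (forall c, exists N, forall j, (j >= N)%coq_nat -> P c j) ->
  exists N, forall c j, (j >= N)%coq_nat -> P c j.
Proof.
move=> H.
suff [N HN] : exists N, forall c, c \in index_enum 'I_n -> forall j, (j >= N)%coq_nat -> P c j.
  by exists N => c j Hj; apply: HN => //; rewrite mem_index_enum.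
elim: (index_enum 'I_n) => [|x r [N IH]]; first by exists 0%nat.
have [Nx Hx] := H x.
exists (Nat.max N Nx) => c; rewrite in_cons => /orP [/eqP -> | Hc] j Hj.
- apply: Hx; lia.
- apply: IH => //; lia.
Qed.

Lemma inv_small (e : R) : 0 < e -> exists N : nat, forall j, (j >= N)%coq_nat -> / (INR j + 1) < e.
Proof.
move=> He. have [N HN] := INR_unbounded (/ e).
exists N => j Hj.
have HjN : INR N <= INR j by apply: le_INR; lia.
have Hpos : 0 < / e by apply: Rinv_0_lt_compat.
rewrite -(Rinv_inv e). apply: Rinv_lt_contravar; [|lra].
apply: Rmult_lt_0_compat; lra.
Qed.

Definition sqd {n : nat} (x y : Vec n) : R := \big[Rplus/0]_(i < n) ((x i - y i) * (x i - y i)).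

Lemma sqd_ge0 n (x y : Vec n) : 0 <= sqd x y.
Proof. apply: bsum_nonneg => i; exact: Rle_0_sqr. Qed.

Lemma cst_cv (a : R) : Un_cv (fun _ => a) a.
Proof. move=> eps Heps; exists 0%nat => j _; rewrite Rdist_eq; lra. Qed.

Lemma separation n (K : vset n) (w : Vec n) :
  is_cone K -> is_closed K -> ~ K w ->
  exists y : Vec n, (forall t, K t -> 0 <= dot y t) /\ dot y w < 0.
Proof.
move=> [[x0 Kx0] [Kadd Kscal]] Kcl Kw.
pose E := fun r => exists k, K k /\ r = - sqd w k.
have [l [Hub Hlub]] : {l | is_lub E l}.
  apply: completeness.
    exists 0 => r [k [_ ->]]; have := sqd_ge0 w k; lra.
  by exists (- sqd w x0); exists x0.
pose delta := - l.
have F1 : forall k, K k -> delta <= sqd w k.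
  move=> k Kk; have := Hub (- sqd w k) (ex_intro _ k (conj Kk erefl)); rewrite /delta; lra.
have F2 : forall e, 0 < e -> exists k, K k /\ sqd w k < delta + e.
  move=> e He; apply: NNPP => Hne.
  have : l <= l - e.
    apply: Hlub => r [k [Kk ->]].
    have : ~ (sqd w k < delta + e) by move=> Hlt; apply: Hne; exists k.
    rewrite /delta; lra.
  lra.
have F2' : forall j : nat, {k | K k /\ sqd w k < delta + / (INR j + 1)}.
  move=> j; apply: constructive_indefinite_description; apply: F2.
  apply: Rinv_0_lt_compat; have := pos_INR j; lra.
pose kj := fun j => proj1_sig (F2' j).
have Kkj : forall j, K (kj j) by move=> j; case: (proj2_sig (F2' j)).
have Dkj : forall j, sqd w (kj j) < delta + / (INR j + 1) by move=> j; case: (proj2_sig (F2' j)).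
have Hpar : forall a b, sqd (kj a) (kj b) <= 2 * / (INR a + 1) + 2 * / (INR b + 1).
  move=> a b.
  pose mid := fun i => / 2 * (kj a i + kj b i).
  have Kmid : K mid by apply: Kscal; [lra| apply: Kadd; apply: Kkj].
  have Hm := F1 _ Kmid.
  have Heq : sqd (kj a) (kj b) = 2 * sqd w (kj a) + 2 * sqd w (kj b) + (-4) * sqd w mid.
    rewrite /sqd -bsum_lin3; apply: eq_bigr => i _; rewrite /mid; field.
  rewrite Heq; have := Dkj a; have := Dkj b; lra.
have Hcau : forall c, Cauchy_crit (fun j => kj j c).
  move=> c eps Heps.
  have [N HN] := @inv_small (eps * eps / 4) ltac:(nra).
  exists N => a b Ha Hb.
  have h1 := HN a Ha; have h2 := HN b Hb.
  have h3 : (kj a c - kj b c) * (kj a c - kj b c) <= sqd (kj a) (kj b).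
    apply: (@bsum_term _ (index_enum _) (fun i => (kj a i - kj b i) * (kj a i - kj b i)) c) => [i|]; [exact: Rle_0_sqr| by rewrite mem_index_enum].
  have h4 := Hpar a b.
  rewrite /Rdist. move: h3; set d := kj a c - kj b c => h3.
  have Hd : d * d < eps * eps by lra.
  unfold Rabs; case: Rcase_abs => _; nra.
pose p_def := fun c => R_complete _ (Hcau c).
pose p := fun c => proj1_sig (p_def c).
have Hp : forall c, Un_cv (fun j => kj j c) (p c) := fun c => proj2_sig (p_def c).
have Kp : K p.
  apply: Kcl => eps Heps.
  have [N HN] := @uniform_N _ (fun c j => Rdist (kj j c) (p c) < eps) (fun c => Hp c eps Heps).
  exists (kj N); split; first exact: Kkj.
  move=> i; exact: (HN i N (le_n N)).
have Dp : sqd w p <= delta.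
  have Hcv : Un_cv (fun j => sqd w (kj j)) (sqd w p).
    apply: bsum_cv => i; apply: CV_mult; apply: CV_minus; (apply: cst_cv || apply: Hp).
  apply: Rnot_lt_le => Hlt.
  have He : 0 < (sqd w p - delta) / 2 by lra.
  have [N1 HN1] := Hcv _ He.
  have [N2 HN2] := inv_small He.
  have := HN1 (Nat.max N1 N2) ltac:(lia); have := HN2 (Nat.max N1 N2) ltac:(lia).
  have := Dkj (Nat.max N1 N2).
  rewrite /Rdist; unfold Rabs; case: Rcase_abs => ?; lra.
pose y := fun i => p i - w i.
have Hvar : forall k, K k -> 0 <= dot y (fun i => k i - p i).
  move=> k Kk. apply: Rnot_lt_le => Ha.
  move: Ha; set a := dot y (fun i => k i - p i) => Ha.
  have Hb : 0 <= sqd k p by apply: sqd_ge0.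
  move: Hb; set b := sqd k p => Hb.
  pose t := Rmin 1 (- a / (b + 1)).
  have Ht0 : 0 < t by apply: Rmin_pos; [lra| apply: Rdiv_lt_0_compat; lra].
  have Ht1 : t <= 1 := Rmin_l _ _.
  have Ht2 : t <= - a / (b+1) := Rmin_r _ _.
  have Ht3 : t * (b + 1) <= - a.
    have e : - a / (b+1) * (b+1) = - a by field; lra.
    rewrite -e; apply: Rmult_le_compat_r; lra.
  pose q := fun i => (1 - t) * p i + t * k i.
  have Kq : K q by apply: Kadd; apply: Kscal => //; lra.
  have Hq := F1 _ Kq.
  have Heq : sqd w q = 1 * sqd w p + (2 * t) * a + (t * t) * b.
    rewrite /a /b /dot /sqd -bsum_lin3; apply: eq_bigr => i _; rewrite /q /y; ring.
  have h : t * (t * (b + 1)) <= t * (- a) by apply: Rmult_le_compat_l; lra.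
  nra.
have K0 : K (fun i => 0 * x0 i) by apply: Kscal; [lra|].
have K2 : K (fun i => 2 * p i) by apply: Kscal; [lra|].
have h0 := Hvar _ K0; have h2 := Hvar _ K2.
have e0 : dot y (fun i => 0 * x0 i - p i) = (-1) * dot y p + 0 * dot y p.
  rewrite /dot -bsum_lin; apply: eq_bigr => i _; ring.
have e2 : dot y (fun i => 2 * p i - p i) = 1 * dot y p + 0 * dot y p.
  rewrite /dot -bsum_lin; apply: eq_bigr => i _; ring.
have H0 : dot y p = 0 by lra.
exists y; split.
  move=> t Kt; have h := Hvar _ Kt.
  have e : dot y (fun i => t i - p i) = 1 * dot y t + (-1) * dot y p.
    rewrite /dot -bsum_lin; apply: eq_bigr => i _; ring.
  lra.
have ey : dot y w = 1 * dot y p + (-1) * dot y y.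
  rewrite /dot -bsum_lin; apply: eq_bigr => i _; rewrite /y; ring.
have [i Hi] : exists i, y i <> 0.
  apply: NNPP => Hn; apply: Kw.
  have -> : w = p; last exact: Kp.
  apply: functional_extensionality => i.
  have : y i = 0 by apply: NNPP => Hyi; apply: Hn; exists i.
  rewrite /y; lra.
have hi : y i * y i <= dot y y.
  apply: (@bsum_term _ (index_enum _) (fun i => y i * y i) i) => [j|]; [exact: Rle_0_sqr| by rewrite mem_index_enum].
have := Rsqr_pos_lt (y i) Hi; rewrite /Rsqr => hp.
lra.
Qed.

Section Conv.
Local Open Scope ring_scope.
Definition mx {m n : nat} (A : Mat m n) : 'M[R]_(m,n) := \matrix_(i,j) A i j.
Definition cv {n : nat} (x : Vec n) : 'cV[R]_n := \matrix_(i,j) x i.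

Lemma mx_mmul m p q (A : Mat m p) (B : Mat p q) : mx (mmul A B) = mx A *m mx B.
Proof. apply/matrixP=> i j; rewrite !mxE; apply: eq_bigr => k _; by rewrite !mxE. Qed.
Lemma cv_mvec m p (A : Mat m p) (x : Vec p) : cv (mvec A x) = mx A *m cv x.
Proof. apply/matrixP=> i j; rewrite !mxE; apply: eq_bigr => k _; by rewrite !mxE. Qed.
Lemma mx_tr m n (A : Mat m n) : mx (trmat A) = (mx A)^T.
Proof. by apply/matrixP=> i j; rewrite !mxE. Qed.
Lemma mx_id n : mx (idmat n) = 1%:M.
Proof. apply/matrixP=> i j; rewrite !mxE /idmat; by case: (i == j). Qed.
Lemma mx_inj m n (A B : Mat m n) : mx A = mx B -> A = B.
Proof. move=> /matrixP H. apply: functional_extensionality => i.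
apply: functional_extensionality => j. by have := H i j; rewrite !mxE. Qed.
Lemma cv_inj n (x y : Vec n) : cv x = cv y -> x = y.
Proof. move=> /matrixP H. apply: functional_extensionality => i.
by have := H i ord0; rewrite !mxE. Qed.
Lemma dotE n (x y : Vec n) : dot x y = ((cv x)^T *m cv y) ord0 ord0.
Proof. rewrite !mxE; apply: eq_bigr => k _; by rewrite !mxE. Qed.
Lemma cv_add n (x y : Vec n) : cv (fun i => (x i + y i)%R) = cv x + cv y.
Proof. by apply/matrixP=> i j; rewrite !mxE. Qed.
Lemma cv_sub n (x y : Vec n) : cv (fun i => (x i - y i)%R) = cv x - cv y.
Proof. by apply/matrixP=> i j; rewrite !mxE. Qed.
Lemma cv_zero n : cv (zerovec n) = 0.
Proof. by apply/matrixP=> i j; rewrite !mxE. Qed.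
End Conv.
Section MxAlg.
Local Open Scope ring_scope.
Variables (m n : nat) (Mm : 'M[R]_m) (Nm : 'M[R]_n) (Am : 'M[R]_(m,n)) (Dm : 'M[R]_(n,m)).
Hypotheses (hMt : Mm^T = Mm) (hMM : Mm *m Mm = 1%:M) (hNt : Nm^T = Nm) (hNN : Nm *m Nm = 1%:M)
  (hC : Mm *m Am = Am *m Nm)
  (P1 : Am *m Nm *m Dm *m Mm *m Am = Am)
  (P2 : Dm *m Mm *m Am *m Nm *m Dm = Dm)
  (P3 : Mm *m (Am *m Nm *m Dm)^T *m Mm = Am *m Nm *m Dm).

Lemma E0 : Mm *m Am *m Nm = Am.
Proof. by rewrite hC -mulmxA hNN mulmx1. Qed.
Lemma E0' : Am^T *m Mm = Nm *m Am^T.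
Proof. by rewrite -{1}hMt -trmx_mul hC trmx_mul hNt. Qed.
Lemma T_AD : Am *m Dm = Dm^T *m Am^T.
Proof.
rewrite -{1}E0 -!mulmxA (mulmxA Am Nm Dm) -P3.
by rewrite !mulmxA hMM mul1mx !trmx_mul hNt -!mulmxA E0' (mulmxA Nm Nm) hNN mul1mx.
Qed.
Lemma T_ADA : Am *m Dm *m Am = Am.
Proof.
have H : Am *m Nm *m Dm *m Am = Am *m Nm.
  by rewrite -{3}P1 -(mulmxA _ Mm Am) hC !mulmxA -(mulmxA _ Nm Nm) hNN mulmx1.
rewrite -{1}E0 -(mulmxA Mm Am Nm) -(mulmxA Mm) -(mulmxA Mm) H.
by rewrite mulmxA E0.
Qed.
Lemma T1 : Am^T *m Am *m Dm = Am^T.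
Proof. by rewrite -mulmxA T_AD mulmxA -!trmx_mul mulmxA T_ADA. Qed.
Lemma T_D : Dm = Dm *m Dm^T *m Am^T.
Proof.
rewrite -{1}P2 -(mulmxA _ Am Nm) -(mulmxA _ (Am *m Nm) Dm) -P3 !mulmxA.
rewrite -(mulmxA Dm Mm Mm) hMM mulmx1 !trmx_mul hNt -!mulmxA E0' !mulmxA.
by rewrite -(mulmxA _ Nm Nm) hNN mulmx1.
Qed.
End MxAlg.

Section Iface.
Local Open Scope ring_scope.

Lemma dot_sym n (x y : Vec n) : dot x y = dot y x.
Proof. apply: eq_bigr => i _; exact: Rmult_comm. Qed.

Lemma dot_N n (N : Mat n n) (x y : Vec n) : (mx N)^T = mx N ->
  dot x (mvec N y) = dot y (mvec N x).
Proof.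
move=> hNt; rewrite !dotE !cv_mvec.
rewrite -[in RHS]hNt -[in RHS](trmxK (cv x)) -trmx_mul -trmx_mul.
by rewrite [in RHS]mxE mulmxA.
Qed.

Lemma dot_NN n (N : Mat n n) (x y : Vec n) : (mx N)^T = mx N -> mx N *m mx N = 1%:M ->
  dot (mvec N x) (mvec N y) = dot x y.
Proof.
move=> hNt hNN; rewrite !dotE !cv_mvec trmx_mul hNt -mulmxA (mulmxA (mx N)) hNN mul1mx.
done.
Qed.
End Iface.

Unset Implicit Arguments.

Theorem lemma3p6 (m n : nat) (M : Mat m m) (N : Mat n n) (A : Mat m n)
  (Adag : Mat n m) (K : vset n) :
  is_weight M -> is_weight N ->
  mmul M A = mmul A N ->
  is_imp M N A Adag ->
  is_cone K -> is_closed K ->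
  vsubset
    (idual M (iimage N (imul N (iadj N M Adag) (idmat n)) (idual N K)))
    (msum (iimage N (imul N A (idmat n)) K)
          (inull M (iadj M N (imul N A (idmat n)))))
  /\
  (vsubset (iimage N (imul M Adag A) K) K ->
   forall x : Vec m,
     idual M (iimage N (imul N (iadj N M Adag) (idmat n)) (idual N K)) x <->
     msum (iimage N (imul N A (idmat n)) K)
          (inull M (iadj M N (imul N A (idmat n)))) x).
Proof.
move=> [wM1 wM2] [wN1 wN2] hC0 [P1' [P2' [P3' P4']]] Kc Kcl.
have hMt : ((mx M)^T = mx M)%R by rewrite -mx_tr wM1.
have hNt : ((mx N)^T = mx N)%R by rewrite -mx_tr wN1.
have hMM : (mx M *m mx M = 1%:M)%R by rewrite -mx_mmul wM2 mx_id.
have hNN : (mx N *m mx N = 1%:M)%R by rewrite -mx_mmul wN2 mx_id.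
have hC : (mx M *m mx A = mx A *m mx N)%R by rewrite -!mx_mmul hC0.
have P1 := f_equal (@mx m n) P1'.
rewrite /imul !mx_mmul in P1.
have P2 := f_equal (@mx n m) P2'.
rewrite /imul !mx_mmul in P2.
have P3 := f_equal (@mx m m) P3'.
rewrite /imul /iadj !mx_mmul mx_tr !mx_mmul in P3.
have R1 : forall x s, iip M x (imulv N (imul N (iadj N M Adag) (idmat n)) s)
                      = dot (mvec Adag x) (mvec N s).
  move=> x s; rewrite /iip /imulv /imul /iadj.
  rewrite !dotE !cv_mvec !mx_mmul mx_tr mx_id mulmx1.
  rewrite -(mulmxA _ (mx N) (mx N)) hNN mulmx1 !mulmxA -(mulmxA _ (mx M) (mx M)) hMM mulmx1.
  by rewrite trmx_mul.
have R2 : forall s, imulv N (imul N A (idmat n)) s = mvec A s.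
  move=> s; apply: cv_inj; rewrite /imulv /imul !cv_mvec !mx_mmul mx_id.
  by rewrite (mulmx1 (mx A *m mx N)) -(mulmxA (mx A) (mx N) (mx N)) hNN (mulmx1 (mx A)).
have R3 : forall z, imulv M (iadj M N (imul N A (idmat n))) z = mvec (trmat A) z.
  move=> z; apply: cv_inj; rewrite /imulv /imul /iadj !cv_mvec !mx_mmul mx_tr !mx_mmul mx_id (mx_tr A).
  rewrite (mulmx1 (mx A *m mx N)) trmx_mul hNt (mulmxA (mx N) (mx N)) hNN (mul1mx (mx A)^T).
  by rewrite -(mulmxA ((mx A)^T) (mx M) (mx M)) hMM (mulmx1 (mx A)^T).
have R4 : forall s, imulv N (imul M Adag A) s = mvec Adag (mvec A s).
  move=> s; apply: cv_inj; rewrite /imulv /imul !cv_mvec !mx_mmul.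
  rewrite -(mulmxA (mx Adag) (mx M) (mx A)) -(mulmxA (mx Adag) (mx M *m mx A) (mx N)).
  by rewrite (E0 hNN hC) mulmxA.
have mvecNN : forall y, mvec N (mvec N y) = y.
  by move=> y; apply: cv_inj; rewrite !cv_mvec mulmxA hNN (mul1mx (cv y)).
have part1 : vsubset
    (idual M (iimage N (imul N (iadj N M Adag) (idmat n)) (idual N K)))
    (msum (iimage N (imul N A (idmat n)) K)
          (inull M (iadj M N (imul N A (idmat n))))).
  move=> x Hx.
  have HK : K (mvec Adag x).
    apply: NNPP => HnK.
    have [y [Hy1 Hy2]] := separation Kc Kcl HnK.
    have Hs : idual N K (mvec N y).
      move=> t Kt; rewrite /iip dot_NN //; exact: Hy1.
    have := Hx _ (ex_intro _ (mvec N y) (conj Hs erefl)).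
    rewrite R1 mvecNN dot_sym; lra.
  exists (mvec A (mvec Adag x)), (fun i => x i - mvec A (mvec Adag x) i).
  split; [|split].
  - by exists (mvec Adag x); split => //; rewrite R2.
  - rewrite /inull R3; apply: cv_inj.
    rewrite cv_mvec cv_sub mulmxBr !cv_mvec mx_tr !mulmxA (T1 hMt hMM hNt hNN hC P1 P3).
    by rewrite subrr cv_zero.
  - apply: functional_extensionality => i; ring.
split; first exact: part1.
move=> Hsub x; split; first exact: part1.
move=> [a [z [[s [Ks ->]] [Hz ->]]]] v [s' [Hs' ->]].
rewrite R1 R2.
have hz : ((mx A)^T *m cv z = 0)%R.
  by rewrite -mx_tr -cv_mvec -R3 Hz cv_zero.
have hDz : (mx Adag *m cv z = 0)%R.
  by rewrite (T_D hMt hMM hNt hNN hC P2 P3) -mulmxA hz mulmx0.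
have eq : mvec Adag (fun i => mvec A s i + z i) = mvec Adag (mvec A s).
  by apply: cv_inj; rewrite !cv_mvec cv_add mulmxDr hDz addr0 cv_mvec.
rewrite eq.
have HK := Hsub _ (ex_intro _ s (conj Ks (esym (R4 s)))).
rewrite dot_N //; exact: Hs'.
Qed.
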